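(* Let $a<b$ and let $f,g:[a,b]\to\mathbb{R}$ be continuous and differentiable (from the right) at $a$. For $a<x\le b$ write $I_f(a,x)=\frac{1}{x-a}\int_a^x f(t)\,\mathrm{d}t$ and similarly $I_g(a,x)$. If $$\bigl[f(a)\,I_g(a,b)-g(a)\,I_f(a,b)\bigr]\cdot\bigl[f'(a)\,I_g(a,b)-g'(a)\,I_f(a,b)\bigr]> 0,$$ then there exists $\eta\in(a,b)$ such that $$I_g(a,b)\bigl(f(\eta)-I_f(a,\eta)\bigr)=I_f(a,b)\bigl(g(\eta)-I_g(a,\eta)\bigr).$$ *)

(* Defs.v *)
From Stdlib Require Import Reals.
From Coquelicot Require Import Coquelicot.
Open Scope R_scope.

Definition right_derivative (f : R -> R) (a l : R) : Prop :=
  filterlim (fun h => (f (a + h) - f a) / h) (at_right 0) (locally l).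

Definition Imean (f : R -> R) (a x : R) : R := RInt f a x / (x - a).

Definition continuous_on_Icc (f : R -> R) (a b : R) : Prop :=
  forall x, a <= x <= b ->
    filterlim f (within (fun y => a <= y <= b) (locally x)) (locally (f x)).

(* Main.v *)
Require Import Defs.
From Stdlib Require Import Reals Lra.
From Coquelicot Require Import Coquelicot.
Open Scope R_scope.

Lemma lin_int (a u0 k x : R) :
  RInt (fun t => u0 + k * (t - a)) a x = u0 * (x - a) + k / 2 * (x - a) ^ 2.
Proof.
  apply is_RInt_unique.
  set (F := fun t => u0 * t + k / 2 * (t - a) ^ 2).
  assert (H : is_RInt (fun t => u0 + k * (t - a)) a x (minus (F x) (F a))).
  { apply (is_RInt_derive (V:=R_CompleteNormedModule)).
    - intros t _. unfold F. auto_derive; auto. field.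
    - intros t _. apply (continuous_plus (fun _ => u0) (fun t => k * (t - a))).
      apply continuous_const.
      apply (continuous_scal_r k (fun t => t - a)).
      apply (continuous_minus (fun t => t) (fun _ => a)).
      apply continuous_id. apply continuous_const. }
  replace (u0 * (x - a) + k / 2 * (x - a) ^ 2) with (minus (F x) (F a)); auto.
  unfold F, minus, plus, opp; simpl. ring.
Qed.

Lemma core (a b e : R) (u : R -> R) :
  a < b -> 0 < u a -> 0 < e ->
  (forall z, continuous u z) ->
  (forall eps, 0 < eps -> exists del, 0 < del /\ forall h, 0 < h < del ->
      Rabs ((u (a + h) - u a) / h - e) < eps) ->
  RInt u a b = 0 ->
  exists eta, a < eta < b /\ u eta = RInt u a eta / (eta - a).
Proof.
  intros hab hua he hc hd hI.
  destruct (hd (e/2)) as [d0 [hd0 Hd0]]; [lra|].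
  set (d := Rmin d0 (b - a)).
  assert (hdpos : 0 < d) by (unfold d; apply Rmin_glb_lt; lra).
  assert (hdle : d <= b - a) by (unfold d; apply Rmin_r).
  assert (hdle0 : d <= d0) by (unfold d; apply Rmin_l).
  assert (exI : forall x y, ex_RInt u x y) by (intros; apply (ex_RInt_continuous (V:=R_CompleteNormedModule)); auto).
  assert (pw : forall t, a < t < a + d ->
     u a + e/2 * (t - a) <= u t <= u a + 3*e/2 * (t - a)).
  { intros t ht. specialize (Hd0 (t - a)). replace (a + (t - a)) with t in Hd0 by ring.
    assert (Hq := Hd0 ltac:(lra)). set (q := (u t - u a) / (t - a)) in Hq.
    assert (u t - u a = q * (t - a)) by (unfold q; field; lra).
    apply Rabs_def2 in Hq. nra. }
  assert (lo : forall x, a < x <= a + d -> u a * (x - a) + e/4 * (x-a)^2 <= RInt u a x).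
  { intros x hx. replace (e/4) with (e/2/2) by field. rewrite <- lin_int.
    apply RInt_le; [lra| |apply exI|].
    apply (ex_RInt_continuous (V:=R_CompleteNormedModule)). intros. apply (continuous_plus (fun _ => u a) (fun t => e/2 * (t - a))).
      apply continuous_const.
      apply (continuous_scal_r (e/2) (fun t => t - a)).
      apply (continuous_minus (fun t => t) (fun _ => a)).
      apply continuous_id. apply continuous_const.
    intros t ht; apply pw; lra. }
  assert (up : forall x, a < x <= a + d -> RInt u a x <= u a * (x - a) + 3*e/4 * (x-a)^2).
  { intros x hx. replace (3*e/4) with (3*e/2/2) by field. rewrite <- lin_int.
    apply RInt_le; [lra|apply exI| |].
    apply (ex_RInt_continuous (V:=R_CompleteNormedModule)). intros. apply (continuous_plus (fun _ => u a) (fun t => 3*e/2 * (t - a))).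
      apply continuous_const.
      apply (continuous_scal_r (3*e/2) (fun t => t - a)).
      apply (continuous_minus (fun t => t) (fun _ => a)).
      apply continuous_id. apply continuous_const.
    intros t ht; apply pw; lra. }
  set (chi := fun x => RInt u a x / (x - a)).
  assert (dPsi : forall x, is_derive (fun y => RInt u a y) x (u x)).
  { intros x. apply (is_derive_RInt (V:=R_NormedModule) u (fun y => RInt u a y) a x); auto. apply filter_forall. intros; apply (RInt_correct (V:=R_CompleteNormedModule)); auto. }
  assert (dchi : forall x, x <> a -> is_derive chi x ((u x * (x - a) - RInt u a x * 1) / (x - a) ^ 2)).
  { intros x hx. unfold chi. apply (is_derive_div (fun y => RInt u a y) (fun y => y - a)); auto.
    auto_derive; auto. lra. }
  set (x0 := a + d/2). set (x1 := a + d/8).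
  assert (c0 : u a + e/4 * (d/2) <= chi x0).
  { unfold chi. specialize (lo x0 ltac:(unfold x0; lra)).
    replace (x0 - a) with (d/2) in * by (unfold x0; ring).
    assert (hw : (d/2) * / (d/2) = 1) by (field; lra).
    assert (0 < / (d/2)) by (apply Rinv_0_lt_compat; lra).
    set (I := RInt u a x0) in *. replace (I / (d/2)) with (I * / (d/2)) by reflexivity.
    set (w := / (d/2)) in *. clearbody w I.
    assert (H2 := Rmult_le_compat_r w _ _ (Rlt_le _ _ H) lo).
    replace (u a + e/4*(d/2)) with ((u a * (d / 2) + e / 4 * (d / 2) ^ 2) * w); [exact H2|].
    transitivity ((u a + e/4*(d/2)) * ((d/2)*w)); [ring| rewrite hw; ring]. }
  assert (c1 : chi x1 <= u a + 3*e/4 * (d/8)).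
  { unfold chi. specialize (up x1 ltac:(unfold x1; lra)).
    replace (x1 - a) with (d/8) in * by (unfold x1; ring).
    assert (hw : (d/8) * / (d/8) = 1) by (field; lra).
    assert (0 < / (d/8)) by (apply Rinv_0_lt_compat; lra).
    set (I := RInt u a x1) in *. replace (I / (d/8)) with (I * / (d/8)) by reflexivity.
    set (w := / (d/8)) in *. clearbody w I.
    assert (H2 := Rmult_le_compat_r w _ _ (Rlt_le _ _ H) up).
    replace (u a + 3*e/4*(d/8)) with ((u a * (d / 8) + 3*e / 4 * (d / 8) ^ 2) * w); [exact H2|].
    transitivity ((u a + 3*e/4*(d/8)) * ((d/8)*w)); [ring| rewrite hw; ring]. }
  assert (cb : chi b = 0) by (unfold chi; rewrite hI; unfold Rdiv; ring).
  destruct (continuity_ab_maj chi x1 b) as [M [HM HMr]].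
  { unfold x1; lra. }
  { intros c hcc. apply continuity_pt_filterlim. apply (ex_derive_continuous (K:=R_AbsRing) (V:=R_NormedModule)).
    eexists. apply dchi. unfold x1 in hcc; lra. }
  assert (hM0 := HM x0 ltac:(unfold x0, x1; lra)).
  assert (M1 : M <> x1) by (intro; subst M; assert (0 < e*d) by (apply Rmult_lt_0_compat; lra); lra).
  assert (Mb : M <> b) by (intro; subst M; assert (0 < e*d) by (apply Rmult_lt_0_compat; lra); lra).
  assert (hMa : M <> a) by (unfold x1 in HMr; lra).
  assert (D := dchi M hMa). apply is_derive_Reals in D.
  assert (Z := deriv_maximum chi x1 b M (exist _ _ D) ltac:(lra) ltac:(lra)
           ltac:(intros; apply HM; lra)).
  simpl in Z.
  exists M. split. unfold x1 in HMr; lra.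
  assert (hne : (M - a) ^ 2 <> 0) by (apply pow_nonzero; lra).
  assert (u M * (M - a) - RInt u a M * 1 = 0).
  { apply (Rmult_eq_reg_r (/ (M - a) ^ 2)). rewrite Rmult_0_l. exact Z.
    apply Rinv_neq_0_compat; auto. }
  field_simplify_eq; [lra | lra].
Qed.

Definition cl (a b x : R) := Rmax a (Rmin b x).

Lemma cl_lip a b x y : Rabs (cl a b y - cl a b x) <= Rabs (y - x).
Proof. unfold cl, Rmax, Rmin. repeat destruct Rle_dec; unfold Rabs; repeat destruct Rcase_abs; lra. Qed.

Lemma cl_in a b x : a <= b -> a <= cl a b x <= b.
Proof. intros. unfold cl, Rmax, Rmin. repeat destruct Rle_dec; lra. Qed.

Lemma cl_id a b x : a <= x <= b -> cl a b x = x.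
Proof. intros. unfold cl, Rmax, Rmin. repeat destruct Rle_dec; lra. Qed.

Lemma ext_cont f a b : a <= b -> continuous_on_Icc f a b ->
  forall x, continuous (fun t => f (cl a b t)) x.
Proof.
  intros hab hf x. unfold continuous.
  eapply filterlim_comp; [|apply (hf (cl a b x) (cl_in a b x hab))].
  intros P [eps HP]. exists eps. intros z hz. apply HP; [|apply cl_in; auto].
  unfold ball in *; simpl in *. unfold AbsRing_ball, abs, minus, plus, opp in *; simpl in *.
  eapply Rle_lt_trans; [apply cl_lip|]. exact hz.
Qed.

Lemma rd_eps f a l : right_derivative f a l -> forall eps, 0 < eps ->
  exists del, 0 < del /\ forall h, 0 < h < del -> Rabs ((f (a + h) - f a) / h - l) < eps.
Proof.
  intros H eps he.
  destruct (proj1 (filterlim_locally _ _) H (mkposreal eps he)) as [del Hd].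
  exists del. split; [apply cond_pos|]. intros h hh.
  assert (Hb : ball 0 del h).
  { unfold ball; simpl. unfold AbsRing_ball, abs, minus, plus, opp; simpl.
    rewrite Ropp_0, Rplus_0_r, Rabs_pos_eq; lra. }
  specialize (Hd h Hb ltac:(lra)). exact Hd.
Qed.

Lemma lin3 (F G : R -> R) (c B A a x : R) : ex_RInt F a x -> ex_RInt G a x ->
  RInt (fun t => c * (B * F t - A * G t)) a x = c * (B * RInt F a x - A * RInt G a x).
Proof.
  intros hF hG. apply is_RInt_unique.
  exact (is_RInt_scal _ _ _ c _ (is_RInt_minus _ _ _ _ _ _
     (is_RInt_scal _ _ _ B _ (RInt_correct _ _ _ hF))
     (is_RInt_scal _ _ _ A _ (RInt_correct _ _ _ hG)))).
Qed.

Theorem mainTheorem12 (a b : R) (f g : R -> R) (df dg : R) :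
  a < b ->
  continuous_on_Icc f a b ->
  continuous_on_Icc g a b ->
  right_derivative f a df ->
  right_derivative g a dg ->
  (f a * Imean g a b - g a * Imean f a b) * (df * Imean g a b - dg * Imean f a b) > 0 ->
  exists eta, a < eta < b /\
    Imean g a b * (f eta - Imean f a eta) = Imean f a b * (g eta - Imean g a eta).
Proof.
  intros hab hf hg hdf hdg hpos.
  set (A := Imean f a b) in *. set (B := Imean g a b) in *.
  set (F := fun t => f (cl a b t)). set (G := fun t => g (cl a b t)).
  assert (cF : forall z, continuous F z) by (apply ext_cont; lra || auto).
  assert (cG : forall z, continuous G z) by (apply ext_cont; lra || auto).
  assert (exF : forall x y, ex_RInt F x y) by (intros; apply (ex_RInt_continuous (V:=R_CompleteNormedModule)); auto).
  assert (exG : forall x y, ex_RInt G x y) by (intros; apply (ex_RInt_continuous (V:=R_CompleteNormedModule)); auto).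
  assert (Fe : forall x, a <= x <= b -> F x = f x) by (intros; unfold F; rewrite cl_id; auto).
  assert (Ge : forall x, a <= x <= b -> G x = g x) by (intros; unfold G; rewrite cl_id; auto).
  assert (IFe : forall x, a <= x <= b -> RInt F a x = RInt f a x).
  { intros x hx. apply RInt_ext. intros y hy. rewrite Rmin_left, Rmax_right in hy by lra. apply Fe; lra. }
  assert (IGe : forall x, a <= x <= b -> RInt G a x = RInt g a x).
  { intros x hx. apply RInt_ext. intros y hy. rewrite Rmin_left, Rmax_right in hy by lra. apply Ge; lra. }
  set (c := B * f a - A * g a).
  set (e' := df * B - dg * A).
  assert (hce : c * e' > 0) by (unfold c, e'; lra).
  set (u := fun t => c * (B * F t - A * G t)).
  destruct (core a b (c * e') u) as [eta [heta Heta]]; auto.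
  - unfold u. rewrite Fe, Ge by lra. fold c. nra.
  - intros z. unfold u.
    apply (continuous_scal_r c (fun t => B * F t - A * G t)).
    apply (continuous_minus (fun t => B * F t) (fun t => A * G t)).
    apply (continuous_scal_r B F); auto. apply (continuous_scal_r A G); auto.
  - intros eps heps.
    set (K := Rabs c * (Rabs A + Rabs B) + 1).
    assert (hK : 0 < K) by (unfold K; assert (0 <= Rabs c * (Rabs A + Rabs B)) by
       (apply Rmult_le_pos; [apply Rabs_pos| pose proof (Rabs_pos A); pose proof (Rabs_pos B); lra]); lra).
    destruct (rd_eps f a df hdf (eps / K)) as [d1 [hd1 Hd1]]. apply Rdiv_lt_0_compat; lra.
    destruct (rd_eps g a dg hdg (eps / K)) as [d2 [hd2 Hd2]]. apply Rdiv_lt_0_compat; lra.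
    exists (Rmin (Rmin d1 d2) (b - a)). split.
    { repeat apply Rmin_glb_lt; lra. }
    intros h hh.
    assert (h1 : h < d1) by (eapply Rlt_le_trans; [apply hh|]; eapply Rle_trans; apply Rmin_l).
    assert (h2 : h < d2) by (eapply Rlt_le_trans; [apply hh|]; eapply Rle_trans; [apply Rmin_l| apply Rmin_r]).
    assert (h3 : h < b - a) by (eapply Rlt_le_trans; [apply hh| apply Rmin_r]).
    specialize (Hd1 h ltac:(lra)). specialize (Hd2 h ltac:(lra)).
    set (p := (f (a + h) - f a) / h - df) in *.
    set (q := (g (a + h) - g a) / h - dg) in *.
    assert (E : (u (a + h) - u a) / h - c * e' = c * (B * p - A * q)).
    { unfold u, p, q, e', c. rewrite !Fe, !Ge by lra. field. lra. }
    rewrite E, Rabs_mult.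
    assert (T : Rabs (B * p - A * q) <= Rabs B * Rabs p + Rabs A * Rabs q).
    { unfold Rminus. eapply Rle_trans; [apply Rabs_triang|]. rewrite Rabs_Ropp, !Rabs_mult. lra. }
    assert (epsK : eps = eps / K * K) by (field; lra).
    set (w := eps / K) in *. clearbody w.
    pose proof (Rabs_pos c). pose proof (Rabs_pos A). pose proof (Rabs_pos B).
    pose proof (Rabs_pos p). pose proof (Rabs_pos q).
    assert (Rabs c * Rabs (B * p - A * q) <= Rabs c * (Rabs B * Rabs p + Rabs A * Rabs q))
      by (apply Rmult_le_compat_l; auto).
    assert (Rabs B * Rabs p <= Rabs B * w) by (apply Rmult_le_compat_l; lra).
    assert (Rabs A * Rabs q <= Rabs A * w) by (apply Rmult_le_compat_l; lra).
    assert (Rabs c * (Rabs B * Rabs p + Rabs A * Rabs q) <= Rabs c * (Rabs B * w + Rabs A * w))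
      by (apply Rmult_le_compat_l; lra).
    assert (0 < w) by (pose proof (Rabs_pos p); lra).
    rewrite epsK. unfold K. nra.
  - unfold u. rewrite lin3 by auto. rewrite IFe, IGe by lra.
    unfold A, B, Imean. match goal with |- ?x = ?y => change (@eq R x y) end. unfold Rdiv; ring.
  - exists eta. split; auto.
    unfold u in Heta. rewrite lin3 in Heta by auto. rewrite Fe, Ge, IFe, IGe in Heta by lra.
    assert (hc0 : c <> 0) by (intro H0; rewrite H0 in hce; lra).
    apply (Rmult_eq_reg_l c); auto. unfold Imean.
    apply (Rmult_eq_reg_r (eta - a)); [|lra].
    replace (c * (B * (f eta - RInt f a eta / (eta - a))) * (eta - a))
      with (c * (B * (f eta * (eta - a) - RInt f a eta))) by (field; lra).
    replace (c * (A * (g eta - RInt g a eta / (eta - a))) * (eta - a))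
      with (c * (A * (g eta * (eta - a) - RInt g a eta))) by (field; lra).
    assert (Heta' : c * (B * f eta - A * g eta) * (eta - a) = c * (B * RInt f a eta - A * RInt g a eta))
      by (rewrite Heta; field; lra).
    nra.
Qed.
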